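(* Let $\theta\in(0,\pi/4)$ and $|\Psi\rangle=\sin\theta|00\rangle+\cos\theta|11\rangle$ on system qubits $1,2$. Let $|\varphi_\pm\rangle=\cos\theta|0\rangle\mp\sin\theta|1\rangle$, and $$\Omega_1=|00\rangle\langle00|+|11\rangle\langle11|,\quad \Omega_2=\mathbb 1-|{+}\rangle\langle{+}|\otimes|\varphi_+\rangle\langle\varphi_+|,\quad \Omega_3=\mathbb 1-|{-}\rangle\langle{-}|\otimes|\varphi_-\rangle\langle\varphi_-|.$$ Let $R_2=H\otimes\begin{pmatrix}\cos\theta&-\sin\theta\\ \sin\theta&\cos\theta\end{pmatrix}$ and $R_3=XH\otimes\begin{pmatrix}\cos\theta&\sin\theta\\ -\sin\theta&\cos\theta\end{pmatrix}$. Define, with ancilla qubits $a_1,a_2,a_3$, $$\mathcal M_1=(\mathbb 1\otimes|0\rangle\langle0|_{a_1})\mathcal C_{X1a_1}\mathcal C_{X2a_1},$$ $$\mathcal M^t_i=(\mathbb 1\otimes|0\rangle\langle0|_{a_i})(R_i^\dagger\otimes\mathbb 1)(X\otimes X\otimes\mathbb 1)\,\mathcal C^2_{X12a_i}\,(X\otimes X\otimes\mathbb 1)(R_i\otimes\mathbb 1),\quad i=2,3.$$ Then $\mathcal M^t_i(\sigma\otimes|0\rangle\langle0|_{a_i})=\Omega_i\sigma\otimes|0\rangle\langle0|_{a_i}$ for $i=2,3$, $\Omega_1\Omega_2\Omega_3=|\Psi\rangle\langle\Psi|$, and hence for every two-qubit operator $\sigma$, $$\mathcal M_1\mathcal M^t_2\mathcal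 M^t_3\big(\sigma\otimes|000\rangle\langle000|\big)=|\Psi\rangle\langle\Psi|\sigma\otimes|000\rangle\langle000|.$$ Furthermore, for $i=2,3$, the two-ancilla operator $\mathcal M^b_i=\mathbb 1-(\mathbb 1\otimes|00\rangle\langle00|_{aa'})(R_i^\dagger\otimes\mathbb 1)\mathcal C_{X1a}\mathcal C_{X2a'}(R_i\otimes\mathbb 1)$ satisfies $\mathcal M^b_i(\sigma\otimes|00\rangle\langle00|_{aa'})=\Omega_i\sigma\otimes|00\rangle\langle00|_{aa'}$, so replacing each $\mathcal M^t_i$ by $\mathcal M^b_i$ (with fresh ancilla pairs) yields the same action on inputs with all ancillas in $|0\rangle$.
   Context: $|\pm\rangle=(|0\rangle\pm|1\rangle)/\sqrt2$; $H$ is the Hadamard gate, $X$ is Pauli-$X$. $\mathcal C_{Xja}$ is the CNOT gate with control system qubit $j$ and target ancilla $a$; $\mathcal C^2_{X12a}$ is the Toffoli gate with controls system qubits $1,2$ and target $a$ (flips $a$ iff both controls are $|1\rangle$). All operators are extended by the identity on qubits they do not act on; $\sigma$ is any operator on the two system qubits. *)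

(* Defs.v *)
From HB Require Import structures.
From mathcomp Require Import all_boot all_order all_algebra.
From mathcomp Require Import reals trigo.
From mathcomp.real_closed Require Import complex mxtens.

Set Implicit Arguments.
Unset Strict Implicit.
Unset Printing Implicit Defensive.

Import Order.TTheory GRing.Theory Num.Theory.
Local Open Scope ring_scope.

Section QC.
Variable R : realType.
Local Notation C := (R[i]).

Definition cr (x : R) : C := Complex x 0.

Definition adj {m n} (A : 'M[C]_(m, n)) : 'M[C]_(n, m) := (map_mx conjc A)^T.

Definition ket0 : 'cV[C]_2 := \col_i (if i == 0 :> nat then 1 else 0).
Definition ket1 : 'cV[C]_2 := \col_i (if i == 1 :> nat then 1 else 0).
Definition proj {n} (v : 'cV[C]_n) : 'M[C]_n := v *m adj v.
Definition P0 : 'M[C]_2 := proj ket0.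
Definition P1 : 'M[C]_2 := proj ket1.
Definition isq2 : C := cr (Num.sqrt 2)^-1.
Definition ketp : 'cV[C]_2 := isq2 *: (ket0 + ket1).
Definition ketm : 'cV[C]_2 := isq2 *: (ket0 - ket1).
Definition Xg : 'M[C]_2 := ket0 *m adj ket1 + ket1 *m adj ket0.
Definition Hg : 'M[C]_2 :=
  isq2 *: (ket0 *m adj ket0 + ket0 *m adj ket1 + ket1 *m adj ket0 - ket1 *m adj ket1).
Definition mx2 (a b c d : R) : 'M[C]_2 :=
  \matrix_(i, j) cr (if i == 0 :> nat then (if j == 0 :> nat then a else b)
                     else (if j == 0 :> nat then c else d)).

(* number of states of m qubits, so that qdim m.+1 = 2 * qdim m *)
Definition qdim (m : nat) : nat := iter m (muln 2) 1.

(* the single-qubit operator U acting on qubit k (0-based) of an m-qubit register,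
   extended by the identity on the other qubits *)
Fixpoint at1 (m k : nat) (U : 'M[C]_2) {struct m} : 'M[C]_(qdim m) :=
  match m return 'M[C]_(qdim m) with
  | 0 => 1%:M
  | m'.+1 => match k with
             | 0 => U *t (1%:M : 'M[C]_(qdim m'))
             | k'.+1 => (1%:M : 'M[C]_2) *t at1 m' k' U
             end
  end.

Fixpoint zeroproj (m : nat) : 'M[C]_(qdim m) :=
  match m return 'M[C]_(qdim m) with
  | 0 => 1%:M
  | m'.+1 => P0 *t zeroproj m'
  end.

(* Global register: two system qubits (1, 2) tensored with m ancilla qubits.
   Type 'M_(2 * 2 * qdim m). *)
Inductive qpos := Sys1 | Sys2 | Anc of nat.  (* Anc k : k-th ancilla, 0-based *)

Definition sysop (m : nat) (A : 'M[C]_(2 * 2)) : 'M[C]_(2 * 2 * qdim m) :=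
  A *t (1%:M : 'M[C]_(qdim m)).

Definition onq (m : nat) (q : qpos) (U : 'M[C]_2) : 'M[C]_(2 * 2 * qdim m) :=
  match q with
  | Sys1 => sysop m (U *t (1%:M : 'M[C]_2))
  | Sys2 => sysop m ((1%:M : 'M[C]_2) *t U)
  | Anc k => (1%:M : 'M[C]_(2 * 2)) *t at1 m k U
  end.

Definition CX (m : nat) (j a : qpos) : 'M[C]_(2 * 2 * qdim m) :=
  onq m j P0 + onq m j P1 *m onq m a Xg.

Definition CCX (m : nat) (j k a : qpos) : 'M[C]_(2 * 2 * qdim m) :=
  (onq m j P1 *m onq m k P1) *m onq m a Xg + (1%:M - onq m j P1 *m onq m k P1).

Variable theta : R.

Definition Psi : 'cV[C]_(2 * 2) :=
  cr (sin theta) *: (ket0 *t ket0) + cr (cos theta) *: (ket1 *t ket1).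
Definition phip : 'cV[C]_2 := cr (cos theta) *: ket0 - cr (sin theta) *: ket1.
Definition phim : 'cV[C]_2 := cr (cos theta) *: ket0 + cr (sin theta) *: ket1.

Definition Omega (i : nat) : 'M[C]_(2 * 2) :=
  match i with
  | 1 => P0 *t P0 + P1 *t P1
  | 2 => 1%:M - proj ketp *t proj phip
  | _ => 1%:M - proj ketm *t proj phim
  end.

Definition Rg (i : nat) : 'M[C]_(2 * 2) :=
  if i == 2 then Hg *t mx2 (cos theta) (- sin theta) (sin theta) (cos theta)
  else (Xg *m Hg) *t mx2 (cos theta) (sin theta) (- sin theta) (cos theta).

Definition M1 (m : nat) (a : nat) : 'M[C]_(2 * 2 * qdim m) :=
  onq m (Anc a) P0 *m CX m Sys1 (Anc a) *m CX m Sys2 (Anc a).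

Definition Mt (m : nat) (i a : nat) : 'M[C]_(2 * 2 * qdim m) :=
  onq m (Anc a) P0 *m sysop m (adj (Rg i)) *m sysop m (Xg *t Xg)
  *m CCX m Sys1 Sys2 (Anc a) *m sysop m (Xg *t Xg) *m sysop m (Rg i).

Definition Mb (m : nat) (i a a' : nat) : 'M[C]_(2 * 2 * qdim m) :=
  1%:M - onq m (Anc a) P0 *m onq m (Anc a') P0 *m sysop m (adj (Rg i))
         *m CX m Sys1 (Anc a) *m CX m Sys2 (Anc a') *m sysop m (Rg i).

End QC.

(* Main.v *)
Require Import Defs.
From HB Require Import structures.
From mathcomp Require Import all_boot all_order all_algebra.
From mathcomp Require Import reals trigo.
From mathcomp.real_closed Require Import complex mxtens.
From mathcomp Require Import ring lra.
Import Order.TTheory GRing.Theory Num.Theory.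
Local Open Scope ring_scope.
Set Implicit Arguments.
Unset Strict Implicit.
Unset Printing Implicit Defensive.

Section Gen.
Variable K : comPzRingType.

Lemma tens11 m n : (1%:M : 'M[K]_m) *t (1%:M : 'M[K]_n) = 1%:M.
Proof.
apply/matrixP=> i j.
case: (mxtens_indexP i)=> i0 i1; case: (mxtens_indexP j)=> j0 j1.
rewrite tensmxE !mxE (inj_eq (can_inj (@mxtens_indexK _ _))) xpair_eqE.
by case: (i0 == j0); case: (i1 == j1); rewrite ?mulr1 ?mulr0.
Qed.

Lemma tensmxDl m n p q (A B : 'M[K]_(m,n)) (C : 'M[K]_(p,q)) :
  (A + B) *t C = A *t C + B *t C.
Proof. by apply/matrixP=> i j; rewrite !mxE mulrDl. Qed.

Lemma tensmxBl m n p q (A B : 'M[K]_(m,n)) (C : 'M[K]_(p,q)) :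
  (A - B) *t C = A *t C - B *t C.
Proof. by apply/matrixP=> i j; rewrite !mxE mulrBl. Qed.

Lemma tensmxDr m n p q (A : 'M[K]_(m,n)) (B C : 'M[K]_(p,q)) :
  A *t (B + C) = A *t B + A *t C.
Proof. by apply/matrixP=> i j; rewrite !mxE mulrDr. Qed.

Lemma tensmxBr m n p q (A : 'M[K]_(m,n)) (B C : 'M[K]_(p,q)) :
  A *t (B - C) = A *t B - A *t C.
Proof. by apply/matrixP=> i j; rewrite !mxE mulrBr. Qed.

Lemma tensmxZl m n p q (a : K) (A : 'M[K]_(m,n)) (B : 'M[K]_(p,q)) :
  (a *: A) *t B = a *: (A *t B).
Proof. by apply/matrixP=> i j; rewrite !mxE mulrA. Qed.

Lemma sum_tens m n (F : 'I_(m*n) -> K) :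
  \sum_k F k = \sum_i \sum_j F (mxtens_index (i,j)).
Proof.
rewrite pair_big /=.
rewrite (reindex (fun p : 'I_m * 'I_n => mxtens_index p)) //=.
  by apply: eq_bigr => -[].
apply: onW_bij; exists (fun k => mxtens_unindex k).
  exact: mxtens_indexK.
exact: mxtens_unindexK.
Qed.
End Gen.

Section Anc.
Variable R : realType.
Local Notation C := (R[i]).

Lemma at1_mul m k (U V : 'M[C]_2) : at1 m k U *m at1 m k V = at1 m k (U *m V).
Proof.
elim: m k => [|m IH] [|k] /=; rewrite ?mulmx1 //; rewrite tensmx_mul ?mulmx1 //.
by rewrite IH.
Qed.

Lemma at1_1 m k : at1 m k (1%:M : 'M[C]_2) = 1%:M.
Proof. elim: m k => [|m IH] [|k] //=; rewrite ?IH tens11 //. Qed.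

Lemma at1_0 m k : (k < m)%N -> at1 m k (0 : 'M[C]_2) = 0.
Proof.
elim: m k => [|m IH] [|k] //= H; first by rewrite tens0mx.
by rewrite IH // tensmx0.
Qed.

Lemma at1_comm m k l (U V : 'M[C]_2) : k != l ->
  at1 m k U *m at1 m l V = at1 m l V *m at1 m k U.
Proof.
elim: m k l => [|m IH] [|k] [|l] //= H; rewrite !tensmx_mul ?mulmx1 ?mul1mx //.
by rewrite IH.
Qed.

Local Notation f := (real_complex R).

Definition rk0 : 'cV[R]_2 := \col_i (if i == 0 :> nat then 1 else 0).
Definition rk1 : 'cV[R]_2 := \col_i (if i == 1 :> nat then 1 else 0).

Ltac mxt := apply/matrixP=> -[[|[|?]] ?] -[[|[|?]] ?] //;
  do ?[rewrite !mxE | rewrite big_ord_recl | rewrite big_ord0] => /=.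


Lemma ket0E : ket0 R = map_mx f rk0.
Proof. by apply/matrixP=> i j; rewrite !mxE; case: ifP; rewrite ?rmorph1 ?rmorph0. Qed.
Lemma ket1E : ket1 R = map_mx f rk1.
Proof. by apply/matrixP=> i j; rewrite !mxE; case: ifP; rewrite ?rmorph1 ?rmorph0. Qed.

Lemma adj_map m n (A : 'M[R]_(m,n)) : adj (map_mx f A) = map_mx f A^T.
Proof. by apply/matrixP=> i j; rewrite /adj !mxE conjc_real. Qed.

Definition r2 : R := (Num.sqrt (2:R))^-1.
Lemma r2sq : r2 * r2 = 2^-1.
Proof.
rewrite /r2 -invfM -expr2 sqr_sqrtr //.
Qed.

Definition rP0 := rk0 *m rk0^T.
Definition rP1 := rk1 *m rk1^T.
Definition rX := rk0 *m rk1^T + rk1 *m rk0^T.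
Definition rH := r2 *: (rk0 *m rk0^T + rk0 *m rk1^T + rk1 *m rk0^T - rk1 *m rk1^T).
Definition rkp := r2 *: (rk0 + rk1).
Definition rkm := r2 *: (rk0 - rk1).
Definition rmx2 (a b c d : R) : 'M[R]_2 :=
  \matrix_(i, j) (if i == 0 :> nat then (if j == 0 :> nat then a else b)
                     else (if j == 0 :> nat then c else d)).

Lemma P0E : P0 R = map_mx f rP0.
Proof. by rewrite /P0 /proj ket0E adj_map -map_mxM. Qed.
Lemma P1E : P1 R = map_mx f rP1.
Proof. by rewrite /P1 /proj ket1E adj_map -map_mxM. Qed.
Lemma XgE : Xg R = map_mx f rX.
Proof. by rewrite /Xg ket0E ket1E !adj_map -!map_mxM -map_mxD. Qed.
Lemma isq2E : isq2 R = f r2. Proof. by []. Qed.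
Lemma HgE : Hg R = map_mx f rH.
Proof.
by rewrite /Hg ket0E ket1E !adj_map -!map_mxM -!map_mxD -map_mxB isq2E -map_mxZ.
Qed.
Lemma ketpE : ketp R = map_mx f rkp.
Proof. by rewrite /ketp ket0E ket1E -map_mxD isq2E -map_mxZ. Qed.
Lemma ketmE : ketm R = map_mx f rkm.
Proof. by rewrite /ketm ket0E ket1E -map_mxB isq2E -map_mxZ. Qed.
Lemma mx2E a b c d : mx2 a b c d = map_mx f (rmx2 a b c d).
Proof. by apply/matrixP=> i j; rewrite !mxE. Qed.
Lemma crE x : cr x = f x. Proof. by []. Qed.


Variable theta : R.
Local Notation c := (cos theta).
Local Notation s := (sin theta).

Ltac fin := have := r2sq; have := cos2Dsin2 theta;
  rewrite ?(mulr1, mul1r, mulr0, mul0r, addr0, add0r, subr0, sub0r); nra.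

Lemma rXX : rX *m rX = 1. Proof. by mxt; fin. Qed.
Lemma rXP1X : rX *m rP1 *m rX = rP0. Proof. by mxt; fin. Qed.
Lemma rXT : rX^T = rX. Proof. by mxt; fin. Qed.
Lemma rHH : rH^T *m rH = 1. Proof. by mxt; fin. Qed.
Lemma rrot1 : (rmx2 c (-s) s c)^T *m rmx2 c (-s) s c = 1. Proof. by mxt; fin. Qed.
Lemma rrot2 : (rmx2 c s (-s) c)^T *m rmx2 c s (-s) c = 1. Proof. by mxt; fin. Qed.
Lemma rHk0 : rH^T *m rk0 = rkp. Proof. by mxt; fin. Qed.
Lemma rXHk0 : (rX *m rH)^T *m rk0 = rkm. Proof. by mxt; fin. Qed.
Lemma rrot1k0 : (rmx2 c (-s) s c)^T *m rk0 = c *: rk0 - s *: rk1. Proof. by mxt; fin. Qed.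
Lemma rrot2k0 : (rmx2 c s (-s) c)^T *m rk0 = c *: rk0 + s *: rk1. Proof. by mxt; fin. Qed.
Lemma rorth : rkp^T *m rkm = 0. Proof. by mxt; fin. Qed.


Lemma rkpp : rkp *m rkp^T = 2^-1 *: ((rk0 + rk1) *m (rk0 + rk1)^T).
Proof. by mxt; fin. Qed.
Lemma rkmm : rkm *m rkm^T = 2^-1 *: ((rk0 - rk1) *m (rk0 - rk1)^T).
Proof. by mxt; fin. Qed.

Lemma r4 :
  (rP0 *t rP0 + rP1 *t rP1) *m
  (1%:M *t 1%:M - 2^-1 *: (((rk0 - rk1) *m (rk0 - rk1)^T) *t ((c *: rk0 + s *: rk1) *m (c *: rk0 + s *: rk1)^T))
   - 2^-1 *: (((rk0 + rk1) *m (rk0 + rk1)^T) *t ((c *: rk0 - s *: rk1) *m (c *: rk0 - s *: rk1)^T)))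
  = (s *: (rk0 *t rk0) + c *: (rk1 *t rk1)) *m (s *: (rk0 *t rk0) + c *: (rk1 *t rk1))^T.
Proof.
apply/matrixP=> i j.
case: (mxtens_indexP i) => i0 i1; case: (mxtens_indexP j) => j0 j1.
rewrite !mxE !sum_tens !big_ord_recl !big_ord0 !mxE !mxtens_indexK /=.
rewrite !big_ord_recl !big_ord0 !mxE /=.
move: i0 i1 j0 j1 => -[[|[|?]] ?] // -[[|[|?]] ?] // -[[|[|?]] ?] // -[[|[|?]] ?] //=.
all: have := cos2Dsin2 theta.
all: rewrite ?(mulr1, mul1r, mulr0, mul0r, addr0, add0r, subr0, sub0r, mulr1n, mulr0n).
all: nra.
Qed.
End Anc.

Section Anc2.
Variable R : realType.
Local Notation C := (R[i]).
Local Notation f := (real_complex R).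
Variable theta : R.
Local Notation c := (cos theta).
Local Notation s := (sin theta).
Section Adj.
Variables m n p : nat.
Lemma adjM (A : 'M[C]_(m,n)) (B : 'M[C]_(n,p)) : adj (A *m B) = adj B *m adj A.
Proof. by rewrite /adj map_mxM trmx_mul. Qed.
Lemma adjK (A : 'M[C]_(m,n)) : adj (adj A) = A.
Proof. by apply/matrixP=> i j; rewrite /adj !mxE conjcK. Qed.
Lemma adj_tens (A : 'M[C]_(m,n)) (B : 'M[C]_(p,p)) : adj (A *t B) = adj A *t adj B.
Proof. by rewrite /adj map_mxT trmx_tens. Qed.
End Adj.
Lemma adj_tensv (A : 'cV[C]_2) (B : 'cV[C]_2) : adj (A *t B) = adj A *t adj B.
Proof. by rewrite /adj map_mxT trmx_tens. Qed.

Lemma proj_tens (u v : 'cV[C]_2) : proj (u *t v) = proj u *t proj v.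
Proof. rewrite /proj adj_tensv. have := tensmx_mul u v (adj u) (adj v). move=> h. exact h. Qed.

Lemma XX : Xg R *m Xg R = 1.
Proof. by rewrite XgE -map_mxM (rXX theta); exact: map_mx1. Qed.
Lemma XP1X : Xg R *m P1 R *m Xg R = P0 R.
Proof. by rewrite XgE P1E P0E -!map_mxM (rXP1X theta). Qed.
Lemma adjX : adj (Xg R) = Xg R.
Proof. by rewrite XgE adj_map (rXT theta). Qed.
Lemma HH : adj (Hg R) *m Hg R = 1.
Proof. by rewrite HgE adj_map -map_mxM (rHH theta); exact: map_mx1. Qed.
Lemma rot1 : adj (mx2 c (-s) s c) *m mx2 c (-s) s c = 1.
Proof. by rewrite mx2E adj_map -map_mxM rrot1; exact: map_mx1. Qed.
Lemma rot2 : adj (mx2 c s (-s) c) *m mx2 c s (-s) c = 1.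
Proof. by rewrite mx2E adj_map -map_mxM rrot2; exact: map_mx1. Qed.
Lemma phipE : phip theta = map_mx f (c *: rk0 R - s *: rk1 R).
Proof. by rewrite /phip ket0E ket1E !crE -!map_mxZ -map_mxB. Qed.
Lemma phimE : phim theta = map_mx f (c *: rk0 R + s *: rk1 R).
Proof. by rewrite /phim ket0E ket1E !crE -!map_mxZ -map_mxD. Qed.

Lemma RR k : (k == 2)%N || (k == 3)%N -> adj (Rg theta k) *m Rg theta k = 1.
Proof.
case/orP=> /eqP -> ; rewrite /Rg /=.
  by rewrite adj_tens tensmx_mul HH rot1 tens11.
by rewrite adj_tens tensmx_mul adjM mulmxA -(mulmxA _ _ (Xg R)) adjX XX mulmx1 HH rot2 tens11.
Qed.

Lemma Rk2 : adj (Rg theta 2) *m (ket0 R *t ket0 R) = ketp R *t phip theta.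
Proof.
rewrite /Rg /= adj_tens tensmx_mul ketpE phipE HgE mx2E ket0E !adj_map -!map_mxM.
by rewrite (rHk0 theta) (rrot1k0 theta).
Qed.
Lemma Rk3 : adj (Rg theta 3) *m (ket0 R *t ket0 R) = ketm R *t phim theta.
Proof.
rewrite /Rg /= adj_tens tensmx_mul ketmE phimE XgE HgE mx2E ket0E -map_mxM !adj_map -!map_mxM.
by rewrite (rXHk0 theta) (rrot2k0 theta).
Qed.


Lemma conj_proj (A : 'M[C]_(2*2)) (v : 'cV[C]_(2*2)) :
  adj A *m proj v *m A = proj (adj A *m v).
Proof. by rewrite /proj adjM adjK !mulmxA. Qed.

Lemma RP0R k : (k == 2)%N || (k == 3)%N ->
  adj (Rg theta k) *m (P0 R *t P0 R) *m Rg theta k = 1 - Omega theta k.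
Proof.
have e : P0 R *t P0 R = proj (ket0 R *t ket0 R) by rewrite proj_tens.
case/orP=> /eqP ->; rewrite [Omega _ _]/= opprB addrC subrK e conj_proj.
  by rewrite Rk2 proj_tens.
by rewrite Rk3 proj_tens.
Qed.

Lemma SysT k : (k == 2)%N || (k == 3)%N ->
  adj (Rg theta k) *m (Xg R *t Xg R) *m (1%:M - P1 R *t P1 R) *m (Xg R *t Xg R)
  *m Rg theta k = Omega theta k.
Proof.
move=> hk.
have E : (Xg R *t Xg R) *m (1%:M - P1 R *t P1 R) *m (Xg R *t Xg R)
          = 1%:M - P0 R *t P0 R.
  rewrite mulmxBr mulmx1 mulmxBl !tensmx_mul XX XP1X.
  by rewrite tens11.
have -> : adj (Rg theta k) *m (Xg R *t Xg R) *m (1%:M - P1 R *t P1 R)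
   *m (Xg R *t Xg R) *m Rg theta k =
   adj (Rg theta k) *m ((Xg R *t Xg R) *m (1%:M - P1 R *t P1 R) *m (Xg R *t Xg R))
   *m Rg theta k by rewrite !mulmxA.
rewrite E mulmxBr mulmx1 mulmxBl (RR hk) RP0R //.
by rewrite opprB addrC subrK.
Qed.


Lemma orth_pm : proj (ketp R) *m proj (ketm R) = 0.
Proof.
have h : adj (ketp R) *m ketm R = 0.
  by rewrite ketpE ketmE adj_map -map_mxM (rorth theta) map_mx0.
by rewrite /proj mulmxA -(mulmxA (ketp R)) h mulmx0 mul0mx.
Qed.

Lemma Om1E : P0 R *t P0 R + P1 R *t P1 R = map_mx f (rP0 R *t rP0 R + rP1 R *t rP1 R).
Proof. by rewrite P0E P1E -!map_mxT -map_mxD. Qed.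

Lemma paE : proj (ketp R) *t proj (phip theta) =
  map_mx f (2^-1 *: (((rk0 R + rk1 R) *m (rk0 R + rk1 R)^T) *t
     ((c *: rk0 R - s *: rk1 R) *m (c *: rk0 R - s *: rk1 R)^T))).
Proof.
by rewrite /proj ketpE phipE !adj_map -!map_mxM -map_mxT (rkpp theta) tensmxZl.
Qed.
Lemma pbE : proj (ketm R) *t proj (phim theta) =
  map_mx f (2^-1 *: (((rk0 R - rk1 R) *m (rk0 R - rk1 R)^T) *t
     ((c *: rk0 R + s *: rk1 R) *m (c *: rk0 R + s *: rk1 R)^T))).
Proof.
by rewrite /proj ketmE phimE !adj_map -!map_mxM -map_mxT (rkmm theta) tensmxZl.
Qed.
Lemma oneE : (1%:M : 'M[C]_(2*2)) = map_mx f (1%:M *t 1%:M).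
Proof. by rewrite tens11 map_mx1. Qed.
Lemma PsiE : proj (Psi theta) =
  map_mx f ((s *: (rk0 R *t rk0 R) + c *: (rk1 R *t rk1 R)) *m
            (s *: (rk0 R *t rk0 R) + c *: (rk1 R *t rk1 R))^T).
Proof.
by rewrite /proj /Psi ket0E ket1E -!map_mxT !crE -!map_mxZ -map_mxD adj_map -map_mxM.
Qed.

Lemma Om123 : Omega theta 1 *m Omega theta 2 *m Omega theta 3 = proj (Psi theta).
Proof.
rewrite -mulmxA /=.
have -> : (1%:M - proj (ketp R) *t proj (phip theta)) *m
    (1%:M - proj (ketm R) *t proj (phim theta)) =
    1%:M - proj (ketm R) *t proj (phim theta) - proj (ketp R) *t proj (phip theta).
  by rewrite mulmxBl mul1mx mulmxBr mulmx1 tensmx_mul orth_pm tens0mx subr0.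
by rewrite Om1E paE pbE oneE PsiE -!map_mxB -map_mxM (r4 theta).
Qed.

End Anc2.

Section Abs.
Variable K : comPzRingType.

Lemma e00' (A B : 'M[K]_2) : (A *t 1%:M) *m (1%:M *t B) = A *t B.
Proof. by rewrite tensmx_mul mulmx1 mul1mx. Qed.

Lemma M1_abs q (p0 p1 : 'M[K]_2) (A0 AX Z : 'M[K]_q) (sigma : 'M[K]_(2*2)) :
  A0 *m AX *m Z = 0 -> A0 *m Z = Z -> A0 *m AX *m AX = A0 ->
  (1%:M *t A0) *m ((p0 *t 1%:M) *t 1%:M + ((p1 *t 1%:M) *t 1%:M) *m (1%:M *t AX))
  *m ((1%:M *t p0) *t 1%:M + ((1%:M *t p1) *t 1%:M) *m (1%:M *t AX))
  *m (sigma *t Z) = ((p0 *t p0 + p1 *t p1) *m sigma) *t Z.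
Proof.
move=> h1 h2 h3.
rewrite !tensmx_mul !mulmx1 !mul1mx.
rewrite !(mulmxDl, mulmxDr).
rewrite !tensmx_mul !mulmx1 !mul1mx ?e00' h3 h2 h1 !tensmx0 !addr0 add0r.
by rewrite tensmxDl.
Qed.

Lemma tensmxNl m n p r (A : 'M[K]_(m,n)) (B : 'M[K]_(p,r)) : (- A) *t B = - (A *t B).
Proof. by apply/matrixP=> i j; rewrite !mxE mulNr. Qed.

Lemma Mt_abs q (p1 : 'M[K]_2) (Ra XX Rr : 'M[K]_(2*2)) (A0 AX Z : 'M[K]_q) (sigma : 'M[K]_(2*2)) :
  A0 *m AX *m Z = 0 -> A0 *m Z = Z ->
  (1%:M *t A0) *m (Ra *t 1%:M) *m (XX *t 1%:M) *m
  (((p1 *t 1%:M) *t 1%:M *m ((1%:M *t p1) *t 1%:M)) *m (1%:M *t AX) +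
   (1%:M - (p1 *t 1%:M) *t 1%:M *m ((1%:M *t p1) *t 1%:M)))
  *m (XX *t 1%:M) *m (Rr *t 1%:M) *m (sigma *t Z) =
  ((Ra *m XX *m (1%:M - p1 *t p1) *m XX *m Rr) *m sigma) *t Z.
Proof.
move=> h1 h2.
rewrite -[(1%:M : 'M[K]_(2*2*q))](@tens11 K (2*2) q).
rewrite !tensmx_mul !mulmx1 ?e00' -tensmxBl mulmxDr !mulmxDl !tensmx_mul !mulmx1 !mul1mx.
by rewrite h1 h2 tensmx0 add0r.
Qed.

Lemma Mb_abs q (p0 p1 : 'M[K]_2) (Ra Rr : 'M[K]_(2*2)) (A0 AX B0 BX Z : 'M[K]_q)
  (sigma : 'M[K]_(2*2)) :
  A0 *m B0 *m Z = Z -> A0 *m B0 *m AX *m Z = 0 -> A0 *m B0 *m BX *m Z = 0 ->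
  A0 *m B0 *m AX *m BX *m Z = 0 ->
  (1%:M - (1%:M *t A0) *m (1%:M *t B0) *m (Ra *t 1%:M) *m
     ((p0 *t 1%:M) *t 1%:M + ((p1 *t 1%:M) *t 1%:M) *m (1%:M *t AX)) *m
     ((1%:M *t p0) *t 1%:M + ((1%:M *t p1) *t 1%:M) *m (1%:M *t BX)) *m (Rr *t 1%:M))
  *m (sigma *t Z) = ((1%:M - Ra *m (p0 *t p0) *m Rr) *m sigma) *t Z.
Proof.
rewrite mulmxBl mul1mx.
rewrite !tensmx_mul !mulmx1 !mul1mx !(mulmxDl, mulmxDr) !tensmx_mul !mulmx1 !mul1mx ?e00'.
move=> h1 h2 h3 h4.
rewrite h1 h2 h3 h4 !tensmx0 !addr0 -(mulmxA Ra) e00' mulNmx tensmxDl.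
by rewrite tensmxNl.
Qed.
End Abs.

Section Anc3.
Variable R : realType.
Local Notation C := (R[i]).
Local Notation f := (real_complex R).
Variable theta : R.

Lemma rP0P0 : rP0 R *m rP0 R = rP0 R.
Proof.
apply/matrixP=> -[[|[|?]] ?] -[[|[|?]] ?] //;
  do ?[rewrite !mxE | rewrite big_ord_recl | rewrite big_ord0] => /=;
  by rewrite ?(mulr1, mul1r, mulr0, mul0r, addr0, add0r).
Qed.
Lemma rP0XP0 : rP0 R *m rX R *m rP0 R = 0.
Proof.
apply/matrixP=> -[[|[|?]] ?] -[[|[|?]] ?] //;
  do ?[rewrite !mxE | rewrite big_ord_recl | rewrite big_ord0] => /=;
  by rewrite ?(mulr1, mul1r, mulr0, mul0r, addr0, add0r).
Qed.

Lemma P0P0 : P0 R *m P0 R = P0 R.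
Proof. by rewrite P0E -map_mxM rP0P0. Qed.
Lemma P0XP0 : P0 R *m Xg R *m P0 R = 0.
Proof. by rewrite P0E XgE -!map_mxM rP0XP0 map_mx0. Qed.

Lemma at1P0Z m k : at1 m k (P0 R) *m zeroproj R m = zeroproj R m.
Proof.
elim: m k => [|m IH] [|k] /=; rewrite ?mul1mx // tensmx_mul ?P0P0 ?mulmx1 ?mul1mx //.
by rewrite IH.
Qed.

Lemma killX m a : (a < m)%N ->
  at1 m a (P0 R) *m at1 m a (Xg R) *m zeroproj R m = 0.
Proof.
move=> H.
rewrite -[zeroproj R m](at1P0Z m a) mulmxA !at1_mul P0XP0 at1_0 ?mul0mx //.
Qed.

Lemma Mt_act m k a (sigma : 'M[C]_(2*2)) : (k == 2)%N || (k == 3)%N -> (a < m)%N ->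
  Mt theta m k a *m (sigma *t zeroproj R m) = (Omega theta k *m sigma) *t zeroproj R m.
Proof.
move=> hk ha.
rewrite /Mt /CCX /onq /sysop.
rewrite Mt_abs ?killX ?at1P0Z //.
by rewrite SysT.
Qed.

Lemma AXX m a : at1 m a (P0 R) *m at1 m a (Xg R) *m at1 m a (Xg R) = at1 m a (P0 R).
Proof.
have h : at1 m a (Xg R *m Xg R) = 1%:M by rewrite (XX theta); exact: at1_1.
by rewrite -mulmxA at1_mul h mulmx1.
Qed.

Lemma M1_act m a (sigma : 'M[C]_(2*2)) : (a < m)%N ->
  M1 R m a *m (sigma *t zeroproj R m) =
  ((P0 R *t P0 R + P1 R *t P1 R) *m sigma) *t zeroproj R m.
Proof.
move=> ha.
rewrite /M1 /CX /onq /sysop.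
by rewrite M1_abs ?killX ?at1P0Z ?AXX.
Qed.

Section Pair.
Variables (m a a' : nat).
Hypotheses (ha : (a < m)%N) (ha' : (a' < m)%N) (hne : a' != a).
Local Notation A0 := (at1 m a (P0 R)).
Local Notation AX := (at1 m a (Xg R)).
Local Notation B0 := (at1 m a' (P0 R)).
Local Notation BX := (at1 m a' (Xg R)).
Local Notation Z := (zeroproj R m).

Lemma K0 : A0 *m B0 *m Z = Z.
Proof. by rewrite -mulmxA !at1P0Z. Qed.
Lemma K1 : A0 *m B0 *m AX *m Z = 0.
Proof.
rewrite -(mulmxA A0 B0 AX) (at1_comm _ _ _ hne) mulmxA -mulmxA at1P0Z.
exact: killX.
Qed.
Lemma K2 : A0 *m B0 *m BX *m Z = 0.
Proof. by rewrite -!mulmxA (mulmxA B0) killX // !mulmx0. Qed.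
Lemma K3 : A0 *m B0 *m AX *m BX *m Z = 0.
Proof.
rewrite -!mulmxA (mulmxA B0 AX) (at1_comm _ _ _ hne) -(mulmxA AX B0).
by rewrite (mulmxA B0 BX) killX // !mulmx0.
Qed.
End Pair.

Lemma Mb_act m k a a' (sigma : 'M[C]_(2*2)) : (k == 2)%N || (k == 3)%N ->
  (a < m)%N -> (a' < m)%N -> a' != a ->
  Mb theta m k a a' *m (sigma *t zeroproj R m) = (Omega theta k *m sigma) *t zeroproj R m.
Proof.
move=> hk ha ha' hne.
rewrite /Mb /CX /onq /sysop.
rewrite Mb_abs ?K0 ?K1 ?K2 ?K3 //.
by rewrite RP0R // opprB addrC subrK.
Qed.

End Anc3.

Unset Implicit Arguments.

Theorem mainTheorem5 (R : realType) (theta : R) :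
  0 < theta < pi / 4 ->
  (forall (k : nat) (sigma : 'M[R[i]]_(2 * 2)), ((k == 2) || (k == 3))%N ->
     Mt theta 1 k 0 *m (sigma *t zeroproj R 1)
     = (Omega theta k *m sigma) *t zeroproj R 1) /\
  Omega theta 1 *m Omega theta 2 *m Omega theta 3 = proj (Psi theta) /\
  (forall sigma : 'M[R[i]]_(2 * 2),
     M1 R 3 0 *m Mt theta 3 2 1 *m Mt theta 3 3 2 *m (sigma *t zeroproj R 3)
     = (proj (Psi theta) *m sigma) *t zeroproj R 3) /\
  (forall (k : nat) (sigma : 'M[R[i]]_(2 * 2)), ((k == 2) || (k == 3))%N ->
     Mb theta 2 k 0 1 *m (sigma *t zeroproj R 2)
     = (Omega theta k *m sigma) *t zeroproj R 2) /\
  (forall sigma : 'M[R[i]]_(2 * 2),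
     M1 R 5 0 *m Mb theta 5 2 1 2 *m Mb theta 5 3 3 4 *m (sigma *t zeroproj R 5)
     = (proj (Psi theta) *m sigma) *t zeroproj R 5).
Proof.
move=> _.
split; first by move=> k sigma hk; apply: Mt_act.
split; first exact: Om123.
split.
  move=> sigma.
  rewrite -(mulmxA (M1 R 3 0 *m Mt theta 3 2 1)) -(mulmxA (M1 R 3 0)).
  rewrite (@Mt_act R theta 3%N 3%N 2%N sigma) // (@Mt_act R theta 3%N 2%N 1%N) // (@M1_act R theta 3%N 0%N) //.
  by rewrite -Om123 !mulmxA.
split; first by move=> k sigma hk; apply: Mb_act.
move=> sigma.
rewrite -(mulmxA (M1 R 5 0 *m Mb theta 5 2 1 2)) -(mulmxA (M1 R 5 0)).
rewrite (@Mb_act R theta 5%N 3%N 3%N 4%N sigma) // (@Mb_act R theta 5%N 2%N 1%N 2%N) // (@M1_act R theta 5%N 0%N) //.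
by rewrite -Om123 !mulmxA.
Qed.
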